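(* Let $\mathbb{K}\in\{\mathbb{R},\mathbb{C}\}$, $G=\mathrm{GL}_6(\mathbb{K})$. For $x\in G$ define the rank matrix $\mathrm{R}(x)=\begin{bmatrix}\mathrm{rank}_{4\times4}(x)&\mathrm{rank}_{4\times2}(x)\\ \mathrm{rank}_{2\times4}(x)&\mathrm{rank}_{2\times2}(x)\end{bmatrix}$, where $\mathrm{rank}_{i\times j}(x)$ is the rank of the lower right $i\times j$ block of $x$, and for a $2\times2$ integer matrix $R$ put $G_R=\{x\in G:\mathrm{R}(x)=R\}$ (these nonempty sets are exactly the $P$-$P^\tau$ double cosets in $G$, where $P$ is the parabolic subgroup of block upper triangular matrices with three $2\times2$ diagonal blocks). Let $x_{\mathrm{left}}=\begin{bmatrix}0&I_2&0\\0&0&I_2\\0&0&0\end{bmatrix}$, $x_{\mathrm{right}}=x_{\mathrm{left}}^\tau$, let $X_{\mathrm{left}}$ be the left invariant vector field on $G$ whose value at $x$ is $xx_{\mathrm{left}}$, and $X_{\mathrm{right}}$ the right invariant vector field whose value at $x$ is $x_{\mathrm{right}}x$. Let $R$ be such that $G_R\neq\emptyset$ and $R$ is not one of $\begin{bmatrix}4&2\\2&2\end{bmatrix},\begin{bmatrix}4&2\\2&1\end{bmatrix},\begin{bmatrix}3&2\\2&2\end{bmatrix},\begin{bmatrix}3&2\\2&1\end{bmatrix}$. Then either $X_{\mathrm{left}}$ or $X_{\mathrm{right}}$ is transversal to $G_R$.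
   Context: A vector field $X$ on $M$ is transversal to a submanifold $Z$ if $X(z)\notin \mathrm{T}_z(Z)$ for all $z\in Z$. $\tau$ denotes matrix transpose. *)

(* Defs.v *)
From mathcomp Require Import all_boot all_algebra.
From mathcomp Require Import all_classical all_reals all_analysis.
From mathcomp Require Export complex.
Import numFieldNormedType.Exports.

Set Implicit Arguments.
Unset Strict Implicit.
Unset Printing Implicit Defensive.

Local Open Scope classical_set_scope.
Local Open Scope ring_scope.

(* The scalar field K is an arbitrary numFieldType equipped with its norm
   topology; it will be instantiated with R and with C = R[i]. *)

Definition tangent_space (K : numFieldType) (n : nat)
    (Z : set 'M[K]_n) (z : 'M[K]_n) : set 'M[K]_n :=
  [set v | exists gamma : K -> 'M[K]_n,
      [/\ gamma 0 = z,
          (\forall t \near (0 : K), Z (gamma t)) &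
          forall i j : 'I_n,
            (gamma h i j - z i j) / h @[h --> (0 : K)^'] --> v i j]].

Definition transversal (K : numFieldType) (n : nat)
    (X : 'M[K]_n -> 'M[K]_n) (Z : set 'M[K]_n) : Prop :=
  forall z, Z z -> ~ tangent_space Z z (X z).

(* rank of the lower right i x j block of x : 'M_6 (for i, j <= 6). *)
Definition rank_lr (K : numFieldType) (i j : nat) (x : 'M[K]_6) : nat :=
  \rank (\matrix_(a < i, b < j) x (inord (6 - i + a)) (inord (6 - j + b))).

Definition mx2 (a b c d : int) : 'M[int]_2 :=
  \matrix_(i < 2, j < 2)
    (if i == 0 :> nat then (if j == 0 :> nat then a else b)
     else (if j == 0 :> nat then c else d)).

Definition rank_matrix (K : numFieldType) (x : 'M[K]_6) : 'M[int]_2 :=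
  mx2 (rank_lr 4 4 x) (rank_lr 4 2 x) (rank_lr 2 4 x) (rank_lr 2 2 x).

Definition GL6 (K : numFieldType) : set 'M[K]_6 := [set x | x \in unitmx].

Definition G_R (K : numFieldType) (R : 'M[int]_2) : set 'M[K]_6 :=
  [set x | GL6 x /\ rank_matrix x = R].

(* x_left = [[0,I2,0],[0,0,I2],[0,0,0]] : entry (i,j) is 1 iff j = i + 2. *)
Definition x_left (K : numFieldType) : 'M[K]_6 :=
  \matrix_(i < 6, j < 6) (j == i.+2 :> nat)%:R.

Definition x_right (K : numFieldType) : 'M[K]_6 := (x_left K)^T.

Definition X_left (K : numFieldType) (x : 'M[K]_6) : 'M[K]_6 := x *m x_left K.
Definition X_right (K : numFieldType) (x : 'M[K]_6) : 'M[K]_6 := x_right K *m x.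

Definition excluded_R (R : 'M[int]_2) : Prop :=
  R = mx2 4 2 2 2 \/ R = mx2 4 2 2 1 \/ R = mx2 3 2 2 2 \/ R = mx2 3 2 2 1.

Definition prop42_for (K : numFieldType) : Prop :=
  forall R : 'M[int]_2,
    @G_R K R !=set0 -> ~ excluded_R R ->
    transversal (@X_left K) (@G_R K R) \/ transversal (@X_right K) (@G_R K R).

(* Main.v *)
Require Import Defs.
From mathcomp Require Import all_boot all_order all_algebra.
From mathcomp Require Import all_classical all_reals all_analysis.
From mathcomp Require Import complex.
Import numFieldNormedType.Exports.
Set Implicit Arguments. Unset Strict Implicit. Unset Printing Implicit Defensive.
Import Order.TTheory GRing.Theory Num.Theory.
Local Open Scope classical_set_scope.
Local Open Scope ring_scope.

From mathcomp Require Import zify.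
Lemma I2_lemma (F : fieldType) (j i : nat) (Bt Vt : 'M[F]_(j,i)) :
  (kermx Bt *m Vt <= Bt)%MS -> (\rank (col_mx Vt Bt) <= 2 * \rank Bt)%N.
Proof.
move=> hK.
set C := (kermx Bt)^C%MS.
have hV : (Vt <= Bt + C *m Vt)%MS.
  have h1 : (1%:M <= kermx Bt + C)%MS by rewrite sub1mx addsmx_compl_full.
  have := submxMr Vt h1; rewrite mul1mx addsmxMr => h2.
  apply: submx_trans h2 _; exact: addsmxS hK (submx_refl _).
have hS : (col_mx Vt Bt <= Bt + C *m Vt)%MS.
  by rewrite -addsmxE addsmx_sub hV addsmxSl.
apply: leq_trans (mxrankS hS) _.
apply: leq_trans (mxrank_adds_leqif _ _).1 _.
have hC : \rank C = \rank Bt by rewrite mxrank_compl mxrank_ker subKn ?rank_leq_row.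
by rewrite mul2n -addnn leq_add2l -hC mxrankM_maxl.
Qed.
Lemma I4_lemma (F : fieldType) (i : nat) (Y1 Y2 Y3 : 'M[F]_(2,i)) :
  (kermx (col_mx Y2 Y3) *m col_mx Y1 Y2 <= col_mx Y2 Y3)%MS ->
  (\rank (col_mx Y1 (col_mx Y2 Y3)) + \rank Y3 <= 2 * \rank (col_mx Y2 Y3))%N.
Proof.
move=> hK.
set Bt := col_mx Y2 Y3.
set Kk := kermx Bt.
set K2 := lsubmx Kk. set K3 := rsubmx Kk.
have eKk : Kk = row_mx K2 K3 by rewrite hsubmxK.
have hY2 : (Y2 <= Bt)%MS by rewrite -addsmxE addsmxSl.
have h0 : K2 *m Y2 + K3 *m Y3 = 0.
  by rewrite -mul_row_col -eKk mulmx_ker.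
have h1 : (K2 *m Y1 <= Bt)%MS.
  have -> : K2 *m Y1 = Kk *m col_mx Y1 Y2 + (- (K3 *m Y2)).
    by rewrite eKk mul_row_col addrK.
  apply: addmx_sub => //; rewrite eqmx_opp; exact: mulmx_sub.
set C2 := K2^C%MS.
have hV : (Y1 <= Bt + C2 *m Y1)%MS.
  have e1 : (1%:M <= K2 + C2)%MS by rewrite sub1mx addsmx_compl_full.
  have := submxMr Y1 e1; rewrite mul1mx addsmxMr => e2.
  apply: submx_trans e2 _; exact: addsmxS h1 (submx_refl _).
have hS : (col_mx Y1 Bt <= Bt + C2 *m Y1)%MS.
  by rewrite -addsmxE addsmx_sub hV addsmxSl.
have r1 : (\rank (col_mx Y1 Bt) <= \rank Bt + (2 - \rank K2))%N.
  apply: leq_trans (mxrankS hS) _.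
  apply: leq_trans (mxrank_adds_leqif _ _).1 _.
  by rewrite leq_add2l -mxrank_compl mxrankM_maxl.
set N := kermx K2.
have hN : (Kk <= N *m Kk + N^C *m Kk)%MS.
  have e1 : (1%:M <= N + N^C)%MS by rewrite sub1mx addsmx_compl_full.
  by have := submxMr Kk e1; rewrite mul1mx addsmxMr.
have hNK2 : N *m K2 = 0 by apply/sub_kermxP.
have hNK : N *m Kk = row_mx 0 (N *m K3) *m 1%:M.
  by rewrite mulmx1 eKk mul_mx_row hNK2.
have hNK3 : (N *m K3 <= kermx Y3)%MS.
  apply/sub_kermxP; rewrite -mulmxA.
  have -> : K3 *m Y3 = - (K2 *m Y2) by apply/eqP; rewrite -addr_eq0 addrC h0.
  by rewrite mulmxN mulmxA hNK2 mul0mx oppr0.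
have r2 : (\rank Kk <= (2 - \rank Y3) + \rank K2)%N.
  apply: leq_trans (mxrankS hN) _.
  apply: leq_trans (mxrank_adds_leqif _ _).1 _.
  apply: leq_add.
    rewrite hNK mulmx1.
    have -> : row_mx (0 : 'M[F]_(4, 2)) (N *m K3) = N *m K3 *m row_mx 0 1%:M.
      by rewrite mul_mx_row mulmx0 mulmx1.
    apply: leq_trans (mxrankM_maxl _ _) _.
    by rewrite -mxrank_ker mxrankS.
  apply: leq_trans (mxrankM_maxl _ _) _.
  by rewrite mxrank_compl mxrank_ker subKn ?rank_leq_row.
have r3 : \rank Kk = (4 - \rank Bt)%N by rewrite mxrank_ker.
have b1 := rank_leq_row Y3. have b2 := rank_leq_col K2.
have b3 := rank_leq_row Bt.
move: r1 r2; rewrite r3 => r1 r2.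
lia.
Qed.
Section Lim.
Variable K : numFieldType.

Lemma cvg_sumI (T : Type) (F : set_system T) (FF : Filter F) (I : finType)
  (f : I -> T -> K) (l : I -> K) :
  (forall i, f i x @[x --> F] --> l i) ->
  (\sum_i f i x) @[x --> F] --> \sum_i l i.
Proof.
move=> H; rewrite unlock /=; elim: (index_enum I) => [|i s IH] /=.
  exact: cvg_cst.
exact: cvgD.
Qed.

Lemma cvg_prodI (T : Type) (F : set_system T) (FF : Filter F) (I : finType)
  (f : I -> T -> K) (l : I -> K) :
  (forall i, f i x @[x --> F] --> l i) ->
  (\prod_i f i x) @[x --> F] --> \prod_i l i.
Proof.
move=> H; rewrite unlock /=; elim: (index_enum I) => [|i s IH] /=.
  exact: cvg_cst.
exact: cvgM.
Qed.

Lemma cvg_det (T : Type) (F : set_system T) (FF : Filter F) (n : nat)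
  (A : T -> 'M[K]_n) (A0 : 'M[K]_n) :
  (forall i j, A x i j @[x --> F] --> A0 i j) ->
  \det (A x) @[x --> F] --> \det A0.
Proof.
move=> H; rewrite /determinant; apply: cvg_sumI => s.
apply: cvgM; first exact: cvg_cst.
by apply: cvg_prodI => i; apply: H.
Qed.

Lemma cvg_mulmx3 (T : Type) (F : set_system T) (FF : Filter F) (m k l n : nat)
  (X : 'M[K]_(m,k)) (D : T -> 'M[K]_(k,l)) (D0 : 'M[K]_(k,l)) (Y : 'M[K]_(l,n)) :
  (forall i j, D x i j @[x --> F] --> D0 i j) ->
  forall a b, (X *m D x *m Y) a b @[x --> F] --> (X *m D0 *m Y) a b.
Proof.
move=> H a b.
have -> : (fun x => (X *m D x *m Y) a b) = (fun x => \sum_j (\sum_i X a i * D x i j) * Y j b).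
  by apply: funext => x; rewrite !mxE; apply: eq_bigr => j _; rewrite !mxE.
rewrite !mxE; apply: cvg_sumI => j.
apply: cvgM; last exact: cvg_cst.
rewrite !mxE; apply: cvg_sumI => i.
apply: cvgM; first exact: cvg_cst.
exact: H.
Qed.
End Lim.

Section Pert.
Variable K : numFieldType.

Lemma rank_mxsub m n m' n' (f : 'I_m' -> 'I_m) (g : 'I_n' -> 'I_n) (A : 'M[K]_(m,n)) :
  (\rank (mxsub f g A) <= \rank A)%N.
Proof.
have -> : mxsub f g A = rowsub f 1%:M *m (rowsub g 1%:M *m A^T)^T.
  rewrite -!rowsubE; apply/matrixP => i j; rewrite !mxE; done.
apply: leq_trans (mxrankM_maxr _ _) _.
by rewrite mxrank_tr -[X in (_ <= X)%N]mxrank_tr mxrankM_maxr.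
Qed.

Lemma mul_pid_entry p m r (X : 'M[K]_(p,m)) i (c : 'I_m) :
  (c < r)%N -> (X *m pid_mx r) i c = X i c.
Proof.
move=> hc; rewrite mxE (bigD1 c) //= big1 ?addr0.
  by rewrite mxE eqxx hc mulr1.
by move=> k hk; rewrite mxE val_eqE (negbTE hk) /= mulr0.
Qed.

Lemma pid_mul_entry p m r (X : 'M[K]_(m,p)) (c : 'I_m) j :
  (c < r)%N -> (pid_mx r *m X) c j = X c j.
Proof.
move=> hc; rewrite mxE (bigD1 c) //= big1 ?addr0.
  by rewrite mxE eqxx hc mul1r.
by move=> k hk; rewrite mxE eq_sym val_eqE (negbTE hk) /= mul0r.
Qed.

Lemma hid : (fun h : K => h) @ (0:K)^' --> (0:K).
Proof. exact: nbhs_dnbhs. Qed.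

Lemma key_pid m n r (N : K -> 'M[K]_(m,n)) (Vp : 'M[K]_(m,n)) :
  (\forall t \near (0:K)^', (\rank (N t) <= r)%N) ->
  (forall a b, (N h a b - pid_mx r a b) / h @[h --> (0:K)^'] --> Vp a b) ->
  forall (a : 'I_m) (b : 'I_n), (r <= a)%N -> (r <= b)%N -> Vp a b = 0.
Proof.
move=> Hr Hd a b ra rb.
have HN : forall i j, N h i j @[h --> (0:K)^'] --> (pid_mx r i j : K).
  move=> i j.
  have H1 : (pid_mx r i j + h * ((N h i j - pid_mx r i j) / h)) @[h --> (0:K)^']
      --> (pid_mx r i j + 0 * Vp i j : K).
    apply: cvgD; first exact: cvg_cst.
    by apply: cvgM; [exact: hid | exact: Hd].
  rewrite mul0r addr0 in H1.
  apply: cvg_trans H1; apply: near_eq_cvg.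
  near=> h; rewrite mulrC divfK; first by rewrite addrC subrK.
  near: h; exact: nbhs_dnbhs_neq.
pose rs (k : 'I_r.+1) : 'I_m := insubd a (if (k < r)%N then val k else val a).
pose cs (k : 'I_r.+1) : 'I_n := insubd b (if (k < r)%N then val k else val b).
have rsE : forall k, val (rs k) = if (k < r)%N then val k else val a.
  move=> k; rewrite val_insubd; case: (ltnP k r) => hk.
    by rewrite (leq_ltn_trans _ (ltn_ord a)) // (leq_trans (ltnW hk) ra).
  by case: ifP.
have csE : forall k, val (cs k) = if (k < r)%N then val k else val b.
  move=> k; rewrite val_insubd; case: (ltnP k r) => hk.
    by rewrite (leq_ltn_trans _ (ltn_ord b)) // (leq_trans (ltnW hk) rb).
  by case: ifP.
pose T h := mxsub rs cs (N h).
pose D h := \matrix_(k, l) (if k == ord_max then T h k l / h else T h k l).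
pose D0 := \matrix_(k, l) (if k == ord_max then Vp a (cs l)
                            else pid_mx r (rs k) (cs l)) : 'M[K]_r.+1.
have hD0 : \forall h \near (0:K)^', \det (D h) = 0.
  near=> h.
  have hh : h != 0 by near: h; exact: nbhs_dnbhs_neq.
  have hT : \det (T h) = 0.
    have hrk : (\rank (T h) <= r)%N.
      apply: leq_trans (rank_mxsub _ _ _) _; near: h; exact: Hr.
    apply/eqP; rewrite -[_ == 0]negbK -unitfE -unitmxE; apply/negP => /mxrank_unit.
    by move=> e; rewrite e ltnn in hrk.
  pose dd := \row_(k < r.+1) (if k == ord_max then h else 1).
  have eT : T h = diag_mx dd *m D h.
    apply/matrixP => k l; rewrite mul_diag_mx !mxE.
    by case: eqP => _; [rewrite mulrC divfK | rewrite mul1r].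
  have edd : \prod_k dd 0 k = h.
    rewrite big_ord_recr /= big1 ?mul1r; first by rewrite mxE eqxx.
    move=> k _; rewrite mxE.
    have -> : (widen_ord (leqnSn r) k == ord_max) = false.
      by apply/negbTE; rewrite -val_eqE /= neq_ltn ltn_ord.
    done.
  move: hT; rewrite eT det_mulmx det_diag edd => /eqP.
  by rewrite mulf_eq0 (negbTE hh) /= => /eqP.
have hDc : forall k l, D h k l @[h --> (0:K)^'] --> D0 k l.
  move=> k l.
  have -> : (fun h => D h k l) =
     (fun h => if k == ord_max then N h (rs k) (cs l) / h else N h (rs k) (cs l)).
    by apply: funext => h; rewrite !mxE.
  rewrite mxE; case: eqP => [->|_]; last exact: HN.
  have -> : rs ord_max = a by apply: val_inj; rewrite rsE /= ltnn.
  have pa : pid_mx r a (cs l) = 0 :> K.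
    rewrite mxE; have -> : (a < r)%N = false by rewrite ltnNge ra.
    by rewrite andbF.
  have E : (fun h => (N h a (cs l) - pid_mx r a (cs l)) / h) = (fun h => N h a (cs l) / h).
    by apply: funext => h; rewrite pa subr0.
  rewrite -E; exact: Hd.
have hdet : \det (D h) @[h --> (0:K)^'] --> \det D0 by apply: cvg_det.
have h0 : \det (D h) @[h --> (0:K)^'] --> (0:K).
  have E : {near (0:K)^', (fun=> (0:K)) =1 (fun h => \det (D h))}.
    by apply: filterS hD0 => h ->.
  exact: cvg_trans (near_eq_cvg E) (cvg_cst _).
have e0 : \det D0 = 0.
  exact: (cvg_unique (@norm_hausdorff K K^o) hdet h0).
suff <- : \det D0 = Vp a b by [].
rewrite det_trig; last first.
  apply/is_trig_mxP => k l hkl; rewrite mxE.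
  have -> : (k == ord_max) = false.
    apply/negbTE; rewrite -val_eqE /= neq_ltn.
    by rewrite (leq_trans hkl) // -ltnS ltn_ord.
  have kr : (k < r)%N by rewrite (leq_trans hkl) // -ltnS ltn_ord.
  rewrite mxE rsE csE kr.
  case: ifP => hl.
    by rewrite (ltn_eqF hkl) /=.
  have -> : (val k == val b) = false by rewrite ltn_eqF // (leq_trans kr).
  done.
rewrite big_ord_recr /= big1 ?mul1r.
  rewrite mxE eqxx.
  by have -> : cs ord_max = b by apply: val_inj; rewrite csE /= ltnn.
move=> k _; rewrite mxE.
have -> : (widen_ord (leqnSn r) k == ord_max) = false.
  by apply/negbTE; rewrite -val_eqE /= neq_ltn ltn_ord.
by rewrite mxE rsE csE /= ltn_ord eqxx ltn_ord.
Unshelve. all: by end_near.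
Qed.
End Pert.

Section Pert2.
Variable K : numFieldType.

Lemma mxsubE m n (A B : 'M[K]_(m,n)) i j : (A - B) i j = A i j - B i j.
Proof. by rewrite !mxE. Qed.

Lemma pert m n (M : K -> 'M[K]_(m,n)) (B V : 'M[K]_(m,n)) :
  (\forall t \near (0:K)^', (\rank (M t) <= \rank B)%N) ->
  (forall a b, (M h a b - B a b) / h @[h --> (0:K)^'] --> V a b) ->
  forall p q (W : 'M[K]_(p,m)) (U : 'M[K]_(n,q)),
    W *m B = 0 -> B *m U = 0 -> W *m V *m U = 0.
Proof.
move=> Hr Hd p q W U hW hU.
set r := \rank B. set L := col_ebase B. set Rr := row_ebase B.
have uL : L \in unitmx := col_ebase_unit B.
have uR : Rr \in unitmx := row_ebase_unit B.
have eB : B = L *m pid_mx r *m Rr by rewrite mulmx_ebase.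
set Vp := invmx L *m V *m invmx Rr.
have eV : V = L *m Vp *m Rr.
  by rewrite /Vp !mulmxA (mulmxV uL) mul1mx -mulmxA (mulVmx uR) mulmx1.
have eP : invmx L *m B *m invmx Rr = pid_mx r.
  by rewrite eB !mulmxA (mulVmx uL) mul1mx -mulmxA (mulmxV uR) mulmx1.
have key : forall (a : 'I_m) (b : 'I_n), (r <= a)%N -> (r <= b)%N -> Vp a b = 0.
  apply: (@key_pid K m n r (fun h => invmx L *m M h *m invmx Rr)).
    apply: filterS Hr => t ht.
    apply: leq_trans (mxrankM_maxl _ _) _.
    by apply: leq_trans (mxrankM_maxr _ _) _.
  move=> a b.
  have E : (fun h => ((invmx L *m M h *m invmx Rr) a b - pid_mx r a b) / h) =
           (fun h => (invmx L *m (h^-1 *: (M h - B)) *m invmx Rr) a b).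
    apply: funext => h.
    rewrite -eP -scalemxAr -scalemxAl [RHS]mxE mulmxBr mulmxBl.
    by rewrite mxsubE mulrC.
  rewrite E; apply: cvg_mulmx3 => i j.
  have E2 : (fun h => (h^-1 *: (M h - B)) i j) = (fun h => (M h i j - B i j) / h).
    by apply: funext => h; rewrite !mxE mulrC.
  rewrite E2; exact: Hd.
have rn : (r <= n)%N by apply: rank_leq_col.
have rm : (r <= m)%N by apply: rank_leq_row.
have hW' : W *m L *m (pid_mx r : 'M[K]_m) = 0.
  have hW2 : W *m (L *m pid_mx r *m Rr) = 0 by rewrite -eB.
  rewrite !mulmxA in hW2.
  have hW3 : W *m L *m (pid_mx r : 'M[K]_(m,n)) = 0.
    by rewrite -(mulmx1 (W *m L *m (pid_mx r : 'M[K]_(m,n)))) -(mulmxV uR) mulmxA hW2 mul0mx.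
  by rewrite -(@pid_mx_id K m n m r rn) mulmxA hW3 mul0mx.
have hU' : (pid_mx r : 'M[K]_n) *m (Rr *m U) = 0.
  have hU2 : (L *m pid_mx r *m Rr) *m U = 0 by rewrite -eB.
  rewrite -!mulmxA in hU2.
  have hU3 : (pid_mx r : 'M[K]_(m,n)) *m (Rr *m U) = 0.
    by rewrite -(mul1mx ((pid_mx r : 'M[K]_(m,n)) *m (Rr *m U))) -(mulVmx uL) -mulmxA hU2 mulmx0.
  by rewrite -(@pid_mx_id K n m n r rm) -mulmxA hU3 mulmx0.
have eWVU : W *m V *m U = (W *m L) *m Vp *m (Rr *m U).
  by rewrite eV !mulmxA.
rewrite eWVU; apply/matrixP => i j; rewrite mxE [RHS]mxE.
apply: big1 => b _.
case: (ltnP b r) => hb.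
  have : ((pid_mx r : 'M[K]_n) *m (Rr *m U)) b j = 0 by rewrite hU' mxE.
  by rewrite pid_mul_entry // => ->; rewrite mulr0.
rewrite mxE big1 ?mul0r // => a _.
case: (ltnP a r) => ha.
  have : (W *m L *m (pid_mx r : 'M[K]_m)) i a = 0 by rewrite hW' mxE.
  by rewrite mul_pid_entry // => ->; rewrite mul0r.
by rewrite key // mulr0.
Qed.
End Pert2.
Ltac add_ord := repeat match goal with
 | o : 'I_?n |- _ => lazymatch goal with
     | _ : is_true (nat_of_ord o < n)%N |- _ => fail
     | _ => have := ltn_ord o; intro end end.
Ltac olia := add_ord; lia.

Section Conc.
Variable K : numFieldType.

Definition blk (i j : nat) (x : 'M[K]_6) : 'M[K]_(i,j) :=
  \matrix_(a < i, b < j) x (inord (6 - i + a)) (inord (6 - j + b)).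

Lemma xl_sum (x : 'M[K]_6) (p q : 'I_6) (k : nat) :
  (k < 4)%N -> val q = (k + 2)%N -> \sum_j x p j * x_left K j q = x p (inord k).
Proof.
move=> hk hq; rewrite (bigD1 (inord k)) //= big1 ?addr0.
  rewrite mxE hq inordK ?addn2 ?eqxx ?mulr1 //; olia.
move=> j hj; rewrite mxE hq.
have -> : ((k + 2)%N == j.+2) = false.
  apply/negbTE; apply: contra hj => /eqP e.
  apply/eqP; apply: val_inj; rewrite /= inordK; olia.
by rewrite mulr0.
Qed.

Lemma xl_entry (x : 'M[K]_6) (p q : 'I_6) (k : nat) :
  (k < 4)%N -> val q = (k + 2)%N -> (x *m x_left K) p q = x p (inord k).
Proof. by move=> hk hq; rewrite mxE; apply: xl_sum. Qed.

Lemma E1 (i : nat) (x : 'M[K]_6) :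
  (blk i 4 x)^T = col_mx (blk i 2 (x *m x_left K))^T (blk i 2 x)^T.
Proof.
apply/matrixP => c a; rewrite !mxE; case: splitP => c' hc; [have {}hc : (c:nat) = c' by exact: hc | have {}hc : (c:nat) = (2 + c')%N by exact: hc]; rewrite !mxE.
  rewrite (@xl_sum _ _ _ (2 + c')%N).
  - by congr (x _ _); apply: val_inj; rewrite /= !inordK; olia.
  - olia.
  - by rewrite /= inordK; olia.
by congr (x _ _); apply: val_inj; rewrite /= !inordK; olia.
Qed.

Definition Y1 (i : nat) (x : 'M[K]_6) : 'M[K]_(i,2) :=
  \matrix_(a < i, b < 2) x (inord (6 - i + a)) (inord b).

Lemma E2 (i : nat) (x : 'M[K]_6) :
  (blk i 4 (x *m x_left K))^T = col_mx (Y1 i x)^T (blk i 2 (x *m x_left K))^T.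
Proof.
apply/matrixP => c a; rewrite !mxE; case: splitP => c' hc; [have {}hc : (c:nat) = c' by exact: hc | have {}hc : (c:nat) = (2 + c')%N by exact: hc]; rewrite !mxE.
  rewrite (@xl_sum _ _ _ c').
  - by congr (x _ _); apply: val_inj; rewrite /= !inordK; olia.
  - olia.
  - by rewrite /= inordK; olia.
rewrite (@xl_sum _ _ _ (c' + 2)%N); last by rewrite /= inordK; olia.
  rewrite (@xl_sum _ _ _ (c' + 2)%N) //; [olia | by rewrite /= inordK; olia].
olia.
Qed.

Lemma E3 (i : nat) (x : 'M[K]_6) : (i <= 6)%N -> x \in unitmx ->
  \rank (col_mx (Y1 i x)^T (col_mx (blk i 2 (x *m x_left K))^T (blk i 2 x)^T)) = i.
Proof.
move=> hi ux.
pose f := fun a : 'I_i => (inord (6 - i + a)%N : 'I_6).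
have -> : col_mx (Y1 i x)^T (col_mx (blk i 2 (x *m x_left K))^T (blk i 2 x)^T)
          = (rowsub f x)^T.
  apply/matrixP => c a.
  have hcc : @nat_of_ord 6 c = @nat_of_ord (2+(2+2)) c by [].
  rewrite !mxE.
  case: splitP => c1 h1.
    have {}h1 : (c : nat) = c1 by exact: h1.
    by rewrite !mxE; congr (x _ _); apply: val_inj; rewrite /= inordK; olia.
  have {}h1 : (c : nat) = (2 + c1)%N by exact: h1.
  rewrite !mxE; case: splitP => c2 h2.
    have {}h2 : (c1 : nat) = c2 by exact: h2.
    rewrite !mxE (@xl_sum _ _ _ (2 + c2)%N); last by rewrite /= inordK; olia.
      by congr (x _ _); apply: val_inj; rewrite /= inordK; olia.
    olia.
  have {}h2 : (c1 : nat) = (2 + c2)%N by exact: h2.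
  by rewrite !mxE /f; congr (x _ _); apply: val_inj; rewrite /= inordK; olia.
rewrite mxrank_tr rowsubE mxrankMfree ?row_free_unit //.
apply/eqP; rewrite eqn_leq rank_leq_row /=.
have e1 : rowsub f 1%:M *m (rowsub f 1%:M)^T = 1%:M :> 'M[K]_i.
  rewrite -rowsubE; apply/matrixP => a b; rewrite !mxE.
  have -> : (f b == f a) = (a == b).
    apply/eqP/eqP => [e|->] //.
    have := congr1 val e; rewrite /= !inordK; [move=> e2; apply: val_inj; rewrite /=; olia | olia | olia].
  by [].
by rewrite -[X in (X <= _)%N](mxrank1 K i) -e1 mxrankM_maxl.
Qed.
End Conc.

Section Final.
Variable K : numFieldType.

Lemma pert_ker m n (B V : 'M[K]_(m,n)) :
  (forall p q (W : 'M[K]_(p,m)) (U : 'M[K]_(n,q)),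
     W *m B = 0 -> B *m U = 0 -> W *m V *m U = 0) ->
  (kermx B^T *m V^T <= B^T)%MS.
Proof.
move=> H; rewrite submxE; apply/eqP.
have h1 : (cokermx B^T)^T *m B = 0.
  by apply: trmx_inj; rewrite trmx_mul trmxK mulmx_coker trmx0.
have h2 : B *m (kermx B^T)^T = 0.
  by apply: trmx_inj; rewrite trmx_mul trmxK mulmx_ker trmx0.
have := H _ _ _ _ h1 h2 => /(congr1 trmx).
by rewrite !trmx_mul !trmxK trmx0 mulmxA.
Qed.

Definition PH i j (x : 'M[K]_6) :=
  forall p q (W : 'M[K]_(p,i)) (U : 'M[K]_(j,q)),
    W *m blk i j x = 0 -> blk i j x *m U = 0 -> W *m blk i j (x *m x_left K) *m U = 0.

Lemma ineqs i (x : 'M[K]_6) : (i <= 6)%N -> x \in unitmx -> PH i 2 x -> PH i 4 x ->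
  (\rank (blk i 4 x) <= 2 * \rank (blk i 2 x))%N /\
  (i + \rank (blk i 2 x) <= 2 * \rank (blk i 4 x))%N.
Proof.
move=> hi ux H2 H4; split.
  have := I2_lemma (pert_ker H2).
  by rewrite -E1 mxrank_tr !mxrank_tr.
have := pert_ker H4; rewrite E1 E2 => /I4_lemma.
by rewrite E3 // -E1 !mxrank_tr.
Qed.

Lemma mx2_inj (a b c d a' b' c' d' : int) :
  mx2 a b c d = mx2 a' b' c' d' -> [/\ a = a', b = b', c = c' & d = d'].
Proof.
move=> e.
have e1 := congr1 (fun M : 'M[int]_2 => M 0 0) e.
have e2 := congr1 (fun M : 'M[int]_2 => M 0 1) e.
have e3 := congr1 (fun M : 'M[int]_2 => M 1 0) e.
have e4 := congr1 (fun M : 'M[int]_2 => M 1 1) e.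
by move: e1 e2 e3 e4; rewrite /mx2 /= !mxE /=.
Qed.

Lemma main : prop42_for K.
Proof.
move=> R _ nexc; left => x [ux Rx] [gamma [g0 gnear gcvg]].
have gn : \forall t \near (0:K)^', rank_matrix (gamma t) = rank_matrix x.
  apply: (@nbhs_dnbhs _ (0:K)).
  by apply: filterS gnear => t [_ ->].
have PHall : forall i j, (\forall t \near (0:K)^', rank_lr i j (gamma t) = rank_lr i j x) ->
    PH i j x.
  move=> i j hn p q W U.
  apply: (@pert K i j (fun h => blk i j (gamma h))).
    by apply: filterS hn => t e; apply: eq_leq; exact: e.
  move=> a b.
  have -> : (fun h => (blk i j (gamma h) a b - blk i j x a b) / h) =
            (fun h => (gamma h (inord (6 - i + a)) (inord (6 - j + b)) -
                      x (inord (6 - i + a)) (inord (6 - j + b))) / h).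
    by apply: funext => h; rewrite !mxE.
  rewrite mxE; exact: gcvg.
have hr : forall (f : 'M[int]_2 -> int) (g : 'M[K]_6 -> nat),
    (forall y, f (rank_matrix y) = (g y)%:Z) ->
    \forall t \near (0:K)^', g (gamma t) = g x.
  move=> f g hfg; apply: filterS gn => t e.
  by have := congr1 f e; rewrite !hfg => /eqP; rewrite eqz_nat => /eqP.
have H44 : PH 4 4 x.
  apply: PHall; apply: (hr (fun M => M 0 0) (fun y => rank_lr 4 4 y)) => y.
  by rewrite /rank_matrix /mx2 !mxE.
have H42 : PH 4 2 x.
  apply: PHall; apply: (hr (fun M => M 0 1) (fun y => rank_lr 4 2 y)) => y.
  by rewrite /rank_matrix /mx2 !mxE.
have H24 : PH 2 4 x.
  apply: PHall; apply: (hr (fun M => M 1 0) (fun y => rank_lr 2 4 y)) => y.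
  by rewrite /rank_matrix /mx2 !mxE.
have H22 : PH 2 2 x.
  apply: PHall; apply: (hr (fun M => M 1 1) (fun y => rank_lr 2 2 y)) => y.
  by rewrite /rank_matrix /mx2 !mxE.
have [a1 a2] := ineqs (isT : (4 <= 6)%N) ux H42 H44.
have [b1 b2] := ineqs (isT : (2 <= 6)%N) ux H22 H24.
have c1 := rank_leq_row (blk 4 4 x).
have c2 := rank_leq_col (blk 4 2 x).
have c3 := rank_leq_row (blk 2 4 x).
have c4 := rank_leq_row (blk 2 2 x).
apply: nexc; rewrite -Rx /rank_matrix.
have -> : rank_lr 4 4 x = \rank (blk 4 4 x) by [].
have -> : rank_lr 4 2 x = \rank (blk 4 2 x) by [].
have -> : rank_lr 2 4 x = \rank (blk 2 4 x) by [].
have -> : rank_lr 2 2 x = \rank (blk 2 2 x) by [].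
have -> : \rank (blk 4 2 x) = 2%N by lia.
have -> : \rank (blk 2 4 x) = 2%N by lia.
(have [->|->] : \rank (blk 4 4 x) = 4%N \/ \rank (blk 4 4 x) = 3%N by lia);
  (have [->|->] : \rank (blk 2 2 x) = 2%N \/ \rank (blk 2 2 x) = 1%N by lia);
  rewrite /excluded_R;
  first [left; reflexivity | right; left; reflexivity
        | right; right; left; reflexivity | right; right; right; reflexivity].
Qed.
End Final.

Theorem proposition4p2 (R : realType) :
  prop42_for (R : numFieldType) /\ prop42_for ((R[i] : numClosedFieldType) : numFieldType).
Proof. by split; apply: main. Qed.
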